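(* Let $L$ be a Lie superalgebra and $\{N_i\}_{i\in J}$ a family of graded ideals of $L$ such that $L/N_i$ is capable for every $i\in J$. Then $L/\bigcap_{i\in J}N_i$ is capable.
   Context: All algebras are over a field $\mathbb{F}$ of characteristic $\neq 2,3$. A Lie superalgebra $L$ is capable if $L\cong H/Z(H)$ for some Lie superalgebra $H$, where $Z(H)$ is the center. *)

(* Defs.v *)
From HB Require Import structures.
From mathcomp Require Import all_boot all_order all_algebra.
Set Implicit Arguments. Unset Strict Implicit. Unset Printing Implicit Defensive.
Import GRing.Theory.
Local Open Scope ring_scope.

Definition subspace (F : fieldType) (V : lmodType F) (P : V -> Prop) : Prop :=
  P 0 /\ forall (k : F) (u v : V), P u -> P v -> P (k *: u + v).

(* homogeneous of degree b (false = even, true = odd) *)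
Definition homog (F : fieldType) (V : lmodType F) (ev od : V -> Prop)
  (b : bool) (x : V) : Prop := if b then od x else ev x.

Definition sgn (F : fieldType) (b : bool) : F := if b then -1 else 1.

Definition is_lie_super (F : fieldType) (V : lmodType F)
  (ev od : V -> Prop) (br : V -> V -> V) : Prop :=
  subspace ev /\ subspace od /\
      (forall x : V, exists x0 x1, [/\ ev x0, od x1 & x = x0 + x1]) /\
      (forall x : V, ev x -> od x -> x = 0) /\
      (forall (k : F) (x y z : V), br (k *: x + y) z = k *: br x z + br y z) /\
      (forall (k : F) (x y z : V), br x (k *: y + z) = k *: br x y + br x z) /\
      (forall (a b : bool) (x y : V), homog ev od a x -> homog ev od b y ->
           homog ev od (addb a b) (br x y)) /\
      (forall (a b : bool) (x y : V), homog ev od a x -> homog ev od b y ->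
           br x y = - (sgn F (a && b) *: br y x)) /\
      (forall (a b c : bool) (x y z : V),
           homog ev od a x -> homog ev od b y -> homog ev od c z ->
           sgn F (a && c) *: br x (br y z) + sgn F (a && b) *: br y (br z x)
             + sgn F (b && c) *: br z (br x y) = 0).

Record lieSuper (F : fieldType) := LieSuper {
  lcarrier :> lmodType F;
  lev : lcarrier -> Prop;
  lod : lcarrier -> Prop;
  lbr : lcarrier -> lcarrier -> lcarrier;
  lieP : is_lie_super lev lod lbr
}.

Definition graded_ideal (F : fieldType) (L : lieSuper F) (N : L -> Prop) : Prop :=
  [/\ subspace N,
      (forall x0 x1 : L, lev x0 -> lod x1 -> N (x0 + x1) -> N x0 /\ N x1) &
      (forall x y : L, N y -> N (lbr x y))].

Definition lie_hom (F : fieldType) (H L : lieSuper F) (f : H -> L) : Prop :=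
  [/\ (forall (k : F) (x y : H), f (k *: x + y) = k *: f x + f y),
      (forall x : H, lev x -> lev (f x)),
      (forall x : H, lod x -> lod (f x)) &
      (forall x y : H, f (lbr x y) = lbr (f x) (f y))].

Definition center (F : fieldType) (H : lieSuper F) (z : H) : Prop :=
  forall x : H, lbr z x = 0.

(* p : L -> Q exhibits Q as the quotient L/N, i.e. p is a surjective
   homomorphism with kernel N (so Q is isomorphic to L/N). *)
Definition is_quotient (F : fieldType) (L Q : lieSuper F) (p : L -> Q)
  (N : L -> Prop) : Prop :=
  [/\ lie_hom p, (forall q : Q, exists x : L, p x = q) &
      (forall x : L, p x = 0 <-> N x)].

Definition capable (F : fieldType) (L : lieSuper F) : Prop :=
  exists (H : lieSuper F) (f : H -> L), is_quotient f (@center F H).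

(* Main.v *)
Require Import Defs.
From HB Require Import structures.
From mathcomp Require Import all_boot all_order all_algebra.
From mathcomp Require Import boolp.
From Stdlib Require Import ProofIrrelevance FunctionalExtensionality.
Set Implicit Arguments. Unset Strict Implicit.
Import GRing.Theory.
Local Open Scope ring_scope.

Section Lin.
Variables (F : fieldType) (U V : lmodType F) (f : U -> V).
Hypothesis h : forall k x y, f (k *: x + y) = k *: f x + f y.
Lemma lin0 : f 0 = 0.
Proof. have e := h 1 0 0; rewrite !scale1r addr0 in e. by apply: (addrI (f 0)); rewrite addr0 -e. Qed.
Lemma linD x y : f (x + y) = f x + f y.
Proof. by have := h 1 x y; rewrite !scale1r. Qed.
Lemma linZ k x : f (k *: x) = k *: f x.
Proof. by have := h k x 0; rewrite !addr0 lin0 addr0. Qed.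
Lemma linN x : f (- x) = - f x.
Proof. by rewrite -scaleN1r linZ scaleN1r. Qed.
End Lin.

Section Acc.
Variables (F : fieldType) (L : lieSuper F).
Lemma ev_sub : subspace (@lev F L). Proof. by case: (lieP L). Qed.
Lemma od_sub : subspace (@lod F L). Proof. by case: (lieP L) => _ []. Qed.
Lemma dec_ex (x : L) : exists x0 x1, [/\ lev x0, lod x1 & x = x0 + x1].
Proof. by case: (lieP L) => _ [_ [h _]]. Qed.
Lemma evod0 (x : L) : lev x -> lod x -> x = 0.
Proof. by case: (lieP L) => _ [_ [_ [h _]]]; apply: h. Qed.
Lemma brl k (x y z : L) : lbr (k *: x + y) z = k *: lbr x z + lbr y z.
Proof. by case: (lieP L) => _ [_ [_ [_ [h _]]]]. Qed.
Lemma brr k (x y z : L) : lbr x (k *: y + z) = k *: lbr x y + lbr x z.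
Proof. by case: (lieP L) => _ [_ [_ [_ [_ [h _]]]]]. Qed.
Lemma br_homog a b (x y : L) : homog (@lev F L) (@lod F L) a x -> homog (@lev F L) (@lod F L) b y ->
  homog (@lev F L) (@lod F L) (addb a b) (lbr x y).
Proof. by case: (lieP L) => _ [_ [_ [_ [_ [_ [h _]]]]]]; apply: h. Qed.
Lemma br_anti a b (x y : L) : homog (@lev F L) (@lod F L) a x -> homog (@lev F L) (@lod F L) b y ->
  lbr x y = - (sgn F (a && b) *: lbr y x).
Proof. by case: (lieP L) => _ [_ [_ [_ [_ [_ [_ [h _]]]]]]]; apply: h. Qed.
Lemma br_jac a b c (x y z : L) :
  homog (@lev F L) (@lod F L) a x -> homog (@lev F L) (@lod F L) b y -> homog (@lev F L) (@lod F L) c z ->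
  sgn F (a && c) *: lbr x (lbr y z) + sgn F (a && b) *: lbr y (lbr z x)
    + sgn F (b && c) *: lbr z (lbr x y) = 0.
Proof. by case: (lieP L) => _ [_ [_ [_ [_ [_ [_ [_ h]]]]]]]; apply: h. Qed.
Lemma dec_uniq (a0 a1 b0 b1 : L) : lev a0 -> lod a1 -> lev b0 -> lod b1 ->
  a0 + a1 = b0 + b1 -> a0 = b0 /\ a1 = b1.
Proof.
move=> ea oa eb ob e.
have e1 : (-1) *: b0 + a0 = (-1) *: a1 + b1.
  have ea0 : a0 = b0 + b1 - a1 by rewrite -e addrK.
  by rewrite !scaleN1r ea0 -!addrA addKr addrC.
have z : (-1) *: b0 + a0 = 0.
  apply: evod0; first by apply: (proj2 ev_sub).
  by rewrite e1; apply: (proj2 od_sub).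
split.
  by apply/eqP; rewrite -subr_eq0; apply/eqP; rewrite -z scaleN1r addrC.
have z2 : b1 - a1 = 0 by rewrite -z e1 scaleN1r addrC.
by apply/esym/eqP; rewrite -subr_eq0; apply/eqP.
Qed.
End Acc.

Section Build.
Variables (F : fieldType) (J : Type) (Q : lieSuper F) (Hs : J -> lieSuper F).
Record pre := Pre { pq : Q; ph : forall i, Hs i }.
Variable S : pre -> Prop.
Definition zp := Pre 0 (fun i => 0).
Definition lcp (k : F) (x y : pre) := Pre (k *: pq x + pq y) (fun i => k *: ph x i + ph y i).
Definition brp (x y : pre) := Pre (lbr (pq x) (pq y)) (fun i => lbr (ph x i) (ph y i)).
Definition evp x := lev (pq x) /\ forall i, lev (ph x i).
Definition odp x := lod (pq x) /\ forall i, lod (ph x i).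
Hypothesis S0 : S zp.
Hypothesis Slc : forall k x y, S x -> S y -> S (lcp k x y).
Hypothesis Sbr : forall x y, S x -> S y -> S (brp x y).
Hypothesis Sdec : forall x, S x -> exists x0 x1,
  [/\ S x0, S x1, evp x0, odp x1 & x = lcp 1 x0 x1].

Lemma pre_eq x y : pq x = pq y -> (forall i, ph x i = ph y i) -> x = y.
Proof.
case: x => a f; case: y => b g /= -> e; congr Pre.
exact: functional_extensionality_dep.
Qed.

Record T := MkT { tv : pre; tP : S tv }.
Lemma T_eq (a b : T) : tv a = tv b -> a = b.
Proof.
case: a => a Pa; case: b => b Pb /= e; subst b; congr MkT.
exact: proof_irrelevance.
Qed.

Definition tzero := MkT S0.
Definition tlc k (a b : T) := MkT (Slc k (tP a) (tP b)).
Definition tadd a b := tlc 1 a b.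
Definition topp a := tlc (-1) a tzero.
Definition tscale k a := tlc k a tzero.

Ltac teq := apply: T_eq; apply: pre_eq => [|i] /=.

Lemma taddA : associative tadd.
Proof. by move=> a b c; teq; rewrite !scale1r addrA. Qed.
Lemma taddC : commutative tadd.
Proof. by move=> a b; teq; rewrite !scale1r addrC. Qed.
Lemma tadd0 : left_id tzero tadd.
Proof. by move=> a; teq; rewrite scale1r add0r. Qed.
Lemma taddN : left_inverse tzero topp tadd.
Proof. by move=> a; teq; rewrite scale1r addr0 scaleN1r addNr. Qed.

HB.instance Definition _ := gen_eqMixin T.
HB.instance Definition _ := gen_choiceMixin T.
HB.instance Definition _ := GRing.isZmodule.Build T taddA taddC tadd0 taddN.

Lemma tscaleA a b v : tscale a (tscale b v) = tscale (a * b) v.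
Proof. by teq; rewrite !addr0 scalerA. Qed.
Lemma tscale1 : left_id 1 tscale.
Proof. by move=> a; teq; rewrite scale1r addr0. Qed.
Lemma tscaleDr : right_distributive tscale +%R.
Proof. by move=> k a b; teq; rewrite !addr0 !scale1r scalerDr. Qed.
Lemma tscaleDl v : {morph tscale^~ v: a b / a + b}.
Proof. by move=> a b; teq; rewrite !addr0 !scale1r scalerDl. Qed.

HB.instance Definition _ := GRing.Zmodule_isLmodule.Build F T tscaleA tscale1 tscaleDr tscaleDl.

Lemma pq_add (a b : T) : pq (tv (a + b)) = pq (tv a) + pq (tv b).
Proof. by rewrite -[LHS]/(1 *: pq (tv a) + pq (tv b)) scale1r. Qed.
Lemma ph_add (a b : T) i : ph (tv (a + b)) i = ph (tv a) i + ph (tv b) i.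
Proof. by rewrite -[LHS]/(1 *: ph (tv a) i + ph (tv b) i) scale1r. Qed.
Lemma pq_scale k (a : T) : pq (tv (k *: a)) = k *: pq (tv a).
Proof. by rewrite -[LHS]/(k *: pq (tv a) + 0) addr0. Qed.
Lemma ph_scale k (a : T) i : ph (tv (k *: a)) i = k *: ph (tv a) i.
Proof. by rewrite -[LHS]/(k *: ph (tv a) i + 0) addr0. Qed.
Lemma pq_zero : pq (tv (0 : T)) = 0. Proof. by []. Qed.
Lemma ph_zero i : ph (tv (0 : T)) i = 0. Proof. by []. Qed.

Definition tbr (a b : T) := MkT (Sbr (tP a) (tP b)).
Definition tev (a : T) := evp (tv a).
Definition tod (a : T) := odp (tv a).

Lemma pq_br a b : pq (tv (tbr a b)) = lbr (pq (tv a)) (pq (tv b)). Proof. by []. Qed.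
Lemma ph_br a b i : ph (tv (tbr a b)) i = lbr (ph (tv a) i) (ph (tv b) i). Proof. by []. Qed.

Lemma T_eq2 (a b : T) : pq (tv a) = pq (tv b) -> (forall i, ph (tv a) i = ph (tv b) i) -> a = b.
Proof. by move=> h1 h2; apply: T_eq; apply: pre_eq. Qed.

Lemma homogT b (x : T) : homog tev tod b x ->
  homog (@lev F Q) (@lod F Q) b (pq (tv x)) /\
  forall i, homog (@lev F (Hs i)) (@lod F (Hs i)) b (ph (tv x) i).
Proof. by case: b => -[]. Qed.

Lemma homogT' b (x : T) :
  homog (@lev F Q) (@lod F Q) b (pq (tv x)) /\
  (forall i, homog (@lev F (Hs i)) (@lod F (Hs i)) b (ph (tv x) i)) ->
  homog tev tod b x.
Proof. by case: b. Qed.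

Lemma subspT (P : forall L : lieSuper F, L -> Prop) :
  (forall L : lieSuper F, subspace (P L)) ->
  subspace (fun a : T => P Q (pq (tv a)) /\ forall i, P (Hs i) (ph (tv a) i)).
Proof.
move=> h; split.
  by split; [exact: (proj1 (h Q)) | move=> i; exact: (proj1 (h (Hs i)))].
move=> k u v [u1 u2] [v1 v2]; split.
  by rewrite pq_add pq_scale; apply: (proj2 (h Q)).
by move=> i; rewrite ph_add ph_scale; apply: (proj2 (h (Hs i))).
Qed.

Lemma lieT : is_lie_super tev tod tbr.
Proof.
split.
  exact: (subspT (@ev_sub F)).
split; first exact: (subspT (@od_sub F)).
split.
  move=> x; have [x0 [x1 [S0' S1' e0 o1 ex]]] := Sdec (tP x).
  exists (MkT S0'), (MkT S1'); split => //.
  by apply: T_eq; rewrite ex.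
split.
  move=> x [e1 e2] [o1 o2]; apply: T_eq2.
    exact: evod0.
  by move=> i; apply: evod0; [apply: e2 | apply: o2].
split.
  move=> k x y z; apply: T_eq2 => [|i];
    by rewrite ?pq_br ?ph_br ?pq_add ?ph_add ?pq_scale ?ph_scale ?pq_br ?ph_br brl.
split.
  move=> k x y z; apply: T_eq2 => [|i];
    by rewrite ?pq_br ?ph_br ?pq_add ?ph_add ?pq_scale ?ph_scale ?pq_br ?ph_br brr.
split.
  move=> a b x y /homogT [hx1 hx2] /homogT [hy1 hy2].
  apply: homogT'; split; [exact: (br_homog hx1 hy1) | move=> i; exact: (br_homog (hx2 i) (hy2 i))].
split.
  move=> a b x y /homogT [hx1 hx2] /homogT [hy1 hy2]; apply: T_eq2 => [|i].
    by rewrite pq_br -scaleN1r pq_scale pq_scale pq_br scaleN1r (br_anti hx1 hy1).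
  by rewrite ph_br -scaleN1r ph_scale ph_scale ph_br scaleN1r (br_anti (hx2 i) (hy2 i)).
move=> a b c x y z /homogT [hx1 hx2] /homogT [hy1 hy2] /homogT [hz1 hz2].
apply: T_eq2 => [|i].
  by rewrite !pq_add !pq_scale !pq_br (br_jac hx1 hy1 hz1).
by rewrite !ph_add !ph_scale !ph_br (br_jac (hx2 i) (hy2 i) (hz2 i)).
Qed.

Definition LT : lieSuper F := @LieSuper F T tev tod tbr lieT.

End Build.

Section Q.
Variables (F : fieldType) (L Q : lieSuper F) (p : L -> Q) (N : L -> Prop).
Hypothesis hp : is_quotient p N.
Lemma q_lin k x y : p (k *: x + y) = k *: p x + p y. Proof. by case: hp => -[h _ _ _] _ _; apply: h. Qed.
Lemma q_ev x : lev x -> lev (p x). Proof. by case: hp => -[_ h _ _] _ _; apply: h. Qed.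
Lemma q_od x : lod x -> lod (p x). Proof. by case: hp => -[_ _ h _] _ _; apply: h. Qed.
Lemma q_br x y : p (lbr x y) = lbr (p x) (p y). Proof. by case: hp => -[_ _ _ h] _ _; apply: h. Qed.
Lemma q_surj q : exists x, p x = q. Proof. by case: hp => _ h _; apply: h. Qed.
Lemma q_ker x : p x = 0 <-> N x. Proof. by case: hp => _ _ h; apply: h. Qed.
End Q.

Record Data (F : fieldType) (L : lieSuper F) (N : L -> Prop) := Dat {
  dQ : lieSuper F; dp : L -> dQ; dH : lieSuper F; df : dH -> dQ;
  dpq : is_quotient dp N; dfq : is_quotient df (@center F dH) }.

Lemma get_data (F : fieldType) (L : lieSuper F) (N : L -> Prop) :
  (exists (Q : lieSuper F) (p : L -> Q), is_quotient p N /\ capable Q) ->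
  exists d : Data N, True.
Proof. by case=> Q [p [hp [H [f hf]]]]; exists (Dat hp hf). Qed.

Lemma decT (F : fieldType) (L : lieSuper F) (x : L) :
  {x0 : L & {x1 : L | [/\ lev x0, lod x1 & x = x0 + x1]}}.
Proof. by have /cid [x0 /cid [x1 h]] := dec_ex x; exists x0, x1. Qed.

Lemma br0l (F : fieldType) (L : lieSuper F) (z : L) : lbr 0 z = 0.
Proof. exact: (lin0 (f := fun u => lbr u z) (fun k u v => brl k u v z)). Qed.


Unset Implicit Arguments.
Theorem mainTheorem10 (F : fieldType)
  (h2 : (2%:R : F) != 0) (h3 : (3%:R : F) != 0)
  (L : lieSuper F) (J : Type) (N : J -> L -> Prop)
  (HN : forall i : J, graded_ideal (N i))
  (Hcap : forall i : J, exists (Q : lieSuper F) (p : L -> Q),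
            is_quotient p (N i) /\ capable Q) :
  forall (Q : lieSuper F) (p : L -> Q),
    is_quotient p (fun x => forall i : J, N i x) -> capable Q.
Proof.
move=> Q p hp.
pose D i : Data (N i) := sval (cid (get_data (Hcap i))).
pose Hs i := dH (D i).
pose fs i : Hs i -> dQ (D i) := @df _ _ _ (D i).
pose ps i : L -> dQ (D i) := @dp _ _ _ (D i).
have hps i : is_quotient (ps i) (N i) := @dpq _ _ _ (D i).
have hfs i : is_quotient (fs i) (@center F (Hs i)) := @dfq _ _ _ (D i).
pose S (x : @pre F J Q Hs) := exists l : L, p l = pq x /\ forall i, fs i (ph x i) = ps i l.
have S0 : S (@zp F J Q Hs).
  exists 0; split; first exact: (lin0 (q_lin hp)).
  by move=> i /=; rewrite (lin0 (q_lin (hfs i))) (lin0 (q_lin (hps i))).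
have Slc : forall k x y, S x -> S y -> S (lcp k x y).
  move=> k x y [l1 [e1 f1]] [l2 [e2 f2]]; exists (k *: l1 + l2); split.
    by rewrite /= (q_lin hp) e1 e2.
  by move=> i /=; rewrite (q_lin (hfs i)) f1 f2 (q_lin (hps i)).
have Sbr : forall x y, S x -> S y -> S (brp x y).
  move=> x y [l1 [e1 f1]] [l2 [e2 f2]]; exists (lbr l1 l2); split.
    by rewrite /= (q_br hp) e1 e2.
  by move=> i /=; rewrite (q_br (hfs i)) f1 f2 (q_br (hps i)).
have Sdec : forall x, S x -> exists x0 x1,
  [/\ S x0, S x1, evp x0, odp x1 & x = lcp 1 x0 x1].
  move=> x [l [el fl]].
  have [l0 [l1 [e0 o1 dl]]] := dec_ex l.
  pose h0 i := projT1 (decT (ph x i)).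
  pose h1 i := sval (projT2 (decT (ph x i))).
  have hh i : [/\ lev (h0 i), lod (h1 i) & ph x i = h0 i + h1 i] :=
    svalP (projT2 (decT (ph x i))).
  have u i : fs i (h0 i) = ps i l0 /\ fs i (h1 i) = ps i l1.
    have [he ho hd] := hh i.
    apply: dec_uniq.
    - exact: (q_ev (hfs i)).
    - exact: (q_od (hfs i)).
    - exact: (q_ev (hps i)).
    - exact: (q_od (hps i)).
    by rewrite -!(linD (q_lin (hfs i))) -!(linD (q_lin (hps i))) -hd -dl fl.
  exists (Pre (p l0) h0), (Pre (p l1) h1); split.
  - by exists l0; split => // i; case: (u i).
  - by exists l1; split => // i; case: (u i).
  - split; first exact: (q_ev hp).
    by move=> i; case: (hh i).
  - split; first exact: (q_od hp).
    by move=> i; case: (hh i).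
  apply: pre_eq => [|i] /=; rewrite scale1r.
    by rewrite -(linD (q_lin hp)) -dl el.
  by case: (hh i).
exists (@LT F J Q Hs S S0 Slc Sbr Sdec), (fun a => pq (tv a)).
split.
- split.
  + by move=> k x y; rewrite /= scale1r addr0.
  + by move=> x [].
  + by move=> x [].
  + by [].
- move=> q; have [l el] := q_surj hp q.
  pose g i := sval (cid (q_surj (hfs i) (ps i l))).
  have Sg : S (Pre q g) by exists l; split => // i /=; rewrite /g; by case: (cid (q_surj (hfs i) (ps i l))).
  by exists (MkT Sg).
move=> x; split.
  move=> /= e0 y.
  have [l [el fl]] := tP x.
  have Nl : forall i, N i l by apply/(q_ker hp); rewrite el.
  have ci i : center (ph (tv x) i).
    by apply/(q_ker (hfs i)); rewrite fl; apply/(q_ker (hps i)).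
  apply: T_eq2 => [|i] /=.
    by rewrite e0 br0l.
  exact: ci.
move=> hc /=.
have [l [el fl]] := tP x.
rewrite -el; apply/(q_ker hp) => i.
apply/(q_ker (hps i)); rewrite -fl; apply/(q_ker (hfs i)) => y.
have [m em] := q_surj (hps i) (fs i y).
pose lift j := sval (cid (q_surj (hfs j) (ps j m))).
pose g j := match pselect (i = j) with
  | left e => eq_rect i (fun j => lcarrier (Hs j)) y j e
  | right _ => lift j end.
have Sz : S (Pre (p m) g).
  exists m; split => // j /=; rewrite /g; case: (pselect (i = j)) => [e|ne].
    by case: j / e.
  by rewrite /lift; case: (cid (q_surj (hfs j) (ps j m))).
have gi : g i = y.
  rewrite /g; case: (pselect (i = i)) => [e|//].
  by rewrite (proof_irrelevance _ e erefl).
have := hc (MkT Sz); move/(congr1 (fun a => ph (tv a) i)).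
by rewrite /= gi.
Qed.
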